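(* Let $A$ be a conservative $d$-dim Petri net. For every configuration $x$ of $A$, the reachability set $R(x)=\{y\mid x\xrightarrow{*}y\}$ is finite and contains a bottom SCC $X\subseteq R(x)$. If, moreover, $A$ is structurally live, then $A$ is reversible.
   Context: A $d$-dim Petri net $A$ is a finite set of actions $a=(a_-,a_+)\in\mathbb{N}^d\times\mathbb{N}^d$; configurations are $x\in\mathbb{N}^d$; $x\xrightarrow{a}y$ if $x=c+a_-$, $y=c+a_+$ for some $c\in\mathbb{N}^d$; $\xrightarrow{*}$ is the reflexive-transitive closure. $\Delta(a)=a_+-a_-$. $A$ is conservative if some $w\in(\mathbb{N}_+)^d$ satisfies $\langle\Delta(a),w\rangle=0$ for all $a\in A$. A bottom SCC of $A$ is a nonempty set $X$ of configurations such that $\{y\mid x\xrightarrow{*}y\}=X$ for every $x\in X$. A configuration $x$ is live if for every $a\in A$ and every $x'$ with $x\xrightarrow{*}x'$ there is $y$ with $x'\xrightarrow{*}y\geq a_-$; $A$ is structurally live if it has a live configuration. $A$ is reversible if $-\Delta(a)$ belongs to the set of finite sums of elements of $\{\Delta(b)\mid b\in A\}$ for every $a\in A$. *)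

(* Defs.v *)
From mathcomp Require Import all_boot all_order all_algebra.
Set Implicit Arguments. Unset Strict Implicit. Unset Printing Implicit Defensive.
Import GRing.Theory Num.Theory.

Definition conf (d : nat) := {ffun 'I_d -> nat}.
(* an action a = (a_-, a_+) *)
Definition action (d : nat) := (conf d * conf d)%type.
Definition petri_net (d : nat) := seq (action d).

Definition step_by d (a : action d) (x y : conf d) : Prop :=
  exists c : conf d, (forall i, x i = (c i + a.1 i)%N) /\ (forall i, y i = (c i + a.2 i)%N).

Definition step d (A : petri_net d) (x y : conf d) : Prop :=
  exists2 a, a \in A & step_by a x y.

Inductive reach d (A : petri_net d) : conf d -> conf d -> Prop :=
| reach_refl x : reach A x x
| reach_step x y z : step A x y -> reach A y z -> reach A x z.

Definition delta d (a : action d) : 'I_d -> int :=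
  fun i => (Posz (a.2 i) - Posz (a.1 i))%R.

Definition conservative d (A : petri_net d) : Prop :=
  exists w : 'I_d -> nat, (forall i, (0 < w i)%N) /\
    forall a, a \in A -> (\sum_(i < d) delta a i * Posz (w i) = 0)%R.

Definition bottom_SCC d (A : petri_net d) (X : conf d -> Prop) : Prop :=
  (exists x, X x) /\ forall x, X x -> forall y, reach A x y <-> X y.

Definition live d (A : petri_net d) (x : conf d) : Prop :=
  forall a, a \in A -> forall x', reach A x x' ->
    exists y, reach A x' y /\ forall i, (a.1 i <= y i)%N.

Definition structurally_live d (A : petri_net d) : Prop := exists x, live A x.

Definition reversible d (A : petri_net d) : Prop :=
  forall a, a \in A -> exists s : seq (action d), all (fun b => b \in A) s /\
    forall i, (- delta a i = \sum_(b <- s) delta b i)%R.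

Definition finite_set d (P : conf d -> Prop) : Prop :=
  exists s : seq (conf d), forall y, P y -> y \in s.

(* Main.v *)
Require Import Defs.
From mathcomp Require Import all_boot all_order all_algebra.
From mathcomp Require Import zify.
From Stdlib Require Import Classical.
From mathcomp Require Import ring.
Set Implicit Arguments. Unset Strict Implicit.
Import GRing.Theory Num.Theory.

Lemma reach_trans d (A : petri_net d) x y z :
  reach A x y -> reach A y z -> reach A x z.
Proof.
elim=> [//|x1 y1 z1 H _ IH] Hz; exact: (reach_step H (IH Hz)).
Qed.

Definition wsum d (w : 'I_d -> nat) (x : conf d) : nat := (\sum_(i < d) x i * w i)%N.

Lemma reach_wsum d (A : petri_net d) (w : 'I_d -> nat) :
  (forall a, a \in A -> (\sum_(i < d) delta a i * Posz (w i) = 0)%R) ->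
  forall x y, reach A x y -> wsum w x = wsum w y.
Proof.
move=> Hw x y; elim=> [//|x1 y1 z1 [a aA [c [Hx Hy]]] _ <-].
suff: Posz (wsum w x1) = Posz (wsum w y1) by case.
rewrite /wsum -!natz !natr_sum.
apply/eqP; rewrite -subr_eq0 -sumrB; apply/eqP.
transitivity (- (\sum_(i < d) delta a i * Posz (w i)))%R; last by rewrite Hw // oppr0.
rewrite -sumrN; apply: eq_bigr => i _.
rewrite /delta Hx Hy !natz !PoszM !PoszD; ring.
Qed.

Lemma reach_bound d (A : petri_net d) (w : 'I_d -> nat) :
  (forall i, (0 < w i)%N) ->
  (forall a, a \in A -> (\sum_(i < d) delta a i * Posz (w i) = 0)%R) ->
  forall x y, reach A x y -> forall i, (y i <= wsum w x)%N.
Proof.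
move=> Hp Hw x y Hr i; rewrite (reach_wsum Hw Hr) /wsum (bigD1 i) //=.
have := Hp i; nia.
Qed.

Lemma bound_finite d (W : nat) :
  exists s : seq (conf d), forall y : conf d, (forall i, (y i <= W)%N) -> y \in s.
Proof.
exists [seq (finfun (fun i => nat_of_ord (f i)) : conf d) | f : {ffun 'I_d -> 'I_W.+1} <- enum {ffun 'I_d -> 'I_W.+1}].
move=> y Hy; apply/mapP; exists [ffun i => (inord (y i) : 'I_W.+1)].
  by rewrite mem_enum.
apply/ffunP => i; rewrite !ffunE inordK //; exact: Hy.
Qed.

Lemma bottom_exists d (A : petri_net d) n :
  forall (L : seq (conf d)) y, (size L <= n)%N -> (forall z, reach A y z -> z \in L) ->
  exists X : conf d -> Prop, (forall z, X z -> reach A y z) /\ bottom_SCC A X.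
Proof.
elim: n => [|n IH] L y HL HR.
  have := HR y (reach_refl _ _); by case: L HL HR.
case: (classic (exists z, reach A y z /\ ~ reach A z y)) => [[z [Hyz Hzy]]|Hno].
  have [||X [HX1 HX2]] := IH [seq t <- L | t != y] z.
    rewrite size_filter.
    have := count_predC (pred1 y) L.
    have : (0 < count (pred1 y) L)%N.
      by rewrite -has_count; apply/hasP; exists y; [apply: HR; apply: reach_refl | by rewrite /= eqxx].
    have : (count (predC (pred1 y)) L = count (fun t => t != y) L) by [].
    move=> E1 E2 E3; rewrite -E1; move: HL; rewrite -E3; case: (count_mem y L) E2 => // k _; rewrite addSn ltnS; apply: leq_trans; apply: leq_addl.
    move=> t Ht; rewrite mem_filter (HR t (reach_trans Hyz Ht)) andbT.
    apply/eqP => E; subst t; exact: Hzy Ht.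
  exists X; split=> // t Ht; exact: reach_trans Hyz (HX1 t Ht).
exists (reach A y); split=> //; split; first by exists y; apply: reach_refl.
move=> x0 Hx0 z; split=> Hz; first exact: reach_trans Hx0 Hz.
have Hx0y : reach A x0 y.
  apply: NNPP => N; apply: Hno; by exists x0.
exact: reach_trans Hx0y Hz.
Qed.

Lemma reach_delta d (A : petri_net d) x y : reach A x y ->
  exists s : seq (action d), all (fun b => b \in A) s /\
    forall i, (Posz (y i) - Posz (x i) = \sum_(b <- s) delta b i)%R.
Proof.
elim=> [x0|x1 y1 z1 [a aA [c [Hx Hy]]] _ [s [Hs Hsum]]].
  by exists [::]; split=> // i; rewrite big_nil subrr.
exists (a :: s); split; first by rewrite /= aA.
move=> i; rewrite big_cons -Hsum /delta Hx Hy !PoszD; ring.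
Qed.

Theorem proposition7 (d : nat) (A : petri_net d) :
  conservative A ->
  (forall x : conf d,
     finite_set (reach A x) /\
     exists X : conf d -> Prop, (forall y, X y -> reach A x y) /\ bottom_SCC A X) /\
  (structurally_live A -> reversible A).
Proof.
move=> [w [Hp Hw]].
have Hfin : forall x : conf d, finite_set (reach A x).
  move=> x; have [s Hs] := bound_finite d (wsum w x).
  exists s => y Hy; apply: Hs => i; exact: (reach_bound Hp Hw Hy i).
have Hbot : forall x : conf d, exists X : conf d -> Prop,
    (forall y, X y -> reach A x y) /\ bottom_SCC A X.
  move=> x; have [s Hs] := Hfin x.
  exact: (@bottom_exists d A (size s) s x (leqnn _) Hs).
split; first by move=> x; split; [exact: Hfin|exact: Hbot].
move=> [x0 Hlive] a aA.
have [X [HX [[z Xz] HXb]]] := Hbot x0.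
have [y [Hzy Hya]] := Hlive a aA z (HX z Xz).
have Xy : X y by apply/(HXb z Xz).
pose y' : conf d := [ffun i => (y i - a.1 i + a.2 i)%N].
have Hst : step A y y'.
  exists a => //; exists [ffun i => (y i - a.1 i)%N]; split=> i; rewrite !ffunE //.
  by rewrite subnK.
have Xy' : X y' by apply/(HXb y Xy); exact: reach_step Hst (reach_refl _ _).
have Hy'y : reach A y' y by apply/(HXb y' Xy').
have [s [Hs Hsum]] := reach_delta Hy'y.
exists s; split=> // i; rewrite -Hsum /delta /y' ffunE.
have := Hya i. move=> Hle.
rewrite PoszD -subzn //; move: (Posz (y i)) (Posz (a.1 i)) (Posz (a.2 i)) => p q r; ring.
Qed.
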